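(* Let $\mathcal{O}$ be the set of $24$-tuples of integers $a_1A_1+a_2A_2$ with $a_1\in\mathbb{Z}$ and $a_2=\pm3^\alpha2^\beta$ for some $\alpha\in\{0,1\}$, $\beta\in\mathbb{N}$, such that $3\nmid\gcd(a_1,a_2)$, where $A_1=(1,0,-1)^8$ and $A_2=(0,1,-1,-1,3,-2,-2,5,-3,-3,7,-4,-4,9,-5,-5,11,-6,-6,13,-7,-7,15,-8)$. Then for every $A\in\mathcal{O}$ and every odd positive integer $m$, the orbit of $S=\mathrm{IAP}(\pi_m(A),\pi_m(A)X_{24})$ is $(3m,3m)$-periodic and the triangles $\nabla S[3\lambda m]$ are balanced in $\mathbb{Z}/m\mathbb{Z}$ for all non-negative integers $\lambda$.
   Context: $\pi_m$ is reduction mod $m$; tuples are row vectors; $X_{24}=(\delta_{r,s}+\delta_{r,25-s})_{1\le r,s\le24}$. For $24$-tuples $A=(a_0,\dots,a_{23})$, $D=(d_0,\dots,d_{23})$, $\mathrm{IAP}(A,D)=(u_j)_{j\in\mathbb{Z}}$ with $u_{24q+r}=a_r+qd_r$. $S[n]=(u_0,\dots,u_{n-1})$. The orbit of $(u_j)$ is $(a_{i,j})_{(i,j)\in\mathbb{N}\times\mathbb{Z}}$ with $a_{0,j}=u_j$, $a_{i,j}=-a_{i-1,j}-a_{i-1,j+1}$; it is $(p,q)$-periodic if $a_{i+q,j}=a_{i,j+p}=a_{i,j}$ for all $(i,j)$. For a finite sequence, $\nabla(u_0,\dots,u_{n-1})=(a_{i,j})_{i+j<n}$ defined by the same rule; it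 is balanced if every element of $\mathbb{Z}/m\mathbb{Z}$ occurs equally often among its entries. *)

(* Defs.v *)
(* Values of Z/mZ are represented by their canonical
   representatives in [0, m) inside int (reduction (z %% m)%Z). *)
From HB Require Import structures.
From mathcomp Require Import all_boot all_order all_algebra.
Set Implicit Arguments. Unset Strict Implicit. Unset Printing Implicit Defensive.
Import Order.TTheory GRing.Theory Num.Theory.
Local Open Scope ring_scope.

Definition piz (m : nat) (z : int) : int := (z %% (m%:Z))%Z.

Definition A1 : 'rV[int]_24 :=
  \row_(j < 24) nth 0 (flatten (nseq 8 [:: 1; 0; -1])) j.

Definition A2 : 'rV[int]_24 :=
  \row_(j < 24) nth 0 [:: 0; 1; -1; -1; 3; -2; -2; 5; -3; -3; 7; -4; -4; 9;
                         -5; -5; 11; -6; -6; 13; -7; -7; 15; -8] j.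

(* X_24 = (delta_{r,s} + delta_{r,25-s})_{1<=r,s<=24}; with 0-based indices
   r,s : 'I_24 this is delta_{r,s} + delta_{r,23-s}. *)
Definition X24 : 'M[int]_24 :=
  \matrix_(r < 24, s < 24) ((r == s :> nat)%:R + (r == 23 - s :> nat)%N%:R).

Definition inO (A : 'rV[int]_24) : Prop :=
  exists (a1 a2 : int) (sgn : bool) (alpha beta : nat),
    (alpha <= 1)%N /\
    a2 = (-1) ^+ sgn * 3 ^+ alpha * 2 ^+ beta /\
    ~~ (3 %| gcdz a1 a2)%Z /\
    A = a1 *: A1 + a2 *: A2.

Definition IAP (m : nat) (A D : 'rV[int]_24) (j : int) : int :=
  let r : 'I_24 := inord `|(j %% 24)%Z|%N in
  let q : int := (j %/ 24)%Z in
  piz m (A 0 r + q * D 0 r).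

Definition Sseq (m : nat) (A : 'rV[int]_24) : int -> int :=
  let pA := map_mx (piz m) A in
  IAP m pA (map_mx (piz m) (pA *m X24)).

Fixpoint orbitm (m : nat) (u : int -> int) (i : nat) (j : int) : int :=
  match i with
  | 0 => piz m (u j)
  | i'.+1 => piz m (- orbitm m u i' j - orbitm m u i' (j + 1))
  end.

Definition periodic (a : nat -> int -> int) (p q : nat) : Prop :=
  forall (i : nat) (j : int), a (i + q)%N j = a i j /\ a i (j + p%:Z) = a i j.

Definition prefixS (u : int -> int) (n : nat) : seq int :=
  [seq u (Posz j) | j <- iota 0 n].

Fixpoint nab (m : nat) (s : seq int) (i j : nat) : int :=
  match i with
  | 0 => piz m (nth 0 s j)
  | i'.+1 => piz m (- nab m s i' j - nab m s i' j.+1)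
  end.

Definition nabla (m : nat) (s : seq int) : seq int :=
  [seq nab m s ij.1 ij.2
  | ij <- [seq (i, j) | i <- iota 0 (size s), j <- iota 0 (size s - i)]].

Definition balanced (m : nat) (t : seq int) : Prop :=
  forall x y : int, 0 <= x < m%:Z -> 0 <= y < m%:Z ->
    count (pred1 x) t = count (pred1 y) t.

(* Main.v *)
Require Import Defs.
From mathcomp Require Import all_boot all_order all_algebra.
From mathcomp Require Import zify ring.
Import Order.TTheory GRing.Theory Num.Theory.

Lemma sum_shift (F : nat -> nat) (p : nat) :
  (forall j, F (j + p) = F j) ->
  forall j0, \sum_(j0 <= j < j0 + p) F j = \sum_(0 <= j < p) F j.
Proof.
move=> hF; elim=> [|j0 IH]; first by rewrite add0n.
case: p hF IH => [|p] hF IH; first by rewrite !addn0 !big_geq.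
have e1 : \sum_(j0 <= j < (j0 + p.+1).+1) F j = \sum_(j0 <= j < j0 + p.+1) F j + F (j0 + p.+1).
  by rewrite big_nat_recr //=; lia.
have e2 : \sum_(j0 <= j < (j0 + p.+1).+1) F j = F j0 + \sum_(j0.+1 <= j < j0.+1 + p.+1) F j.
  rewrite big_ltn; last by lia.
  by rewrite addSn.
have h1 : \sum_(j0 <= j < j0 + p.+1) F j + F (j0 + p.+1)
          = F j0 + \sum_(j0.+1 <= j < j0.+1 + p.+1) F j by rewrite -e1 -e2.
rewrite addnC hF in h1.
by rewrite -IH; lia.
Qed.

Lemma sum_blocks3 (f : nat -> nat) (m : nat) :
  \sum_(0 <= e < 3 * m) f e = \sum_(0 <= k < m) (f (3 * k) + f (3 * k + 1) + f (3 * k + 2))%N.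
Proof.
elim: m => [|m IH]; first by rewrite muln0 !big_geq.
rewrite [RHS]big_nat_recr // -IH.
have -> : (3 * m.+1 = (3 * m + 2).+1)%N by lia.
rewrite big_nat_recr; last by lia.
have -> : (3 * m + 2 = (3 * m + 1).+1)%N by lia.
rewrite big_nat_recr; last by lia.
have -> : (3 * m + 1 = (3 * m).+1)%N by lia.
rewrite big_nat_recr; last by lia.
by rewrite /= !addnA.
Qed.

Lemma sum_periods (F : nat -> nat) (p : nat) :
  (forall j, F (j + p) = F j) ->
  forall l, \sum_(0 <= j < l * p) F j = l * \sum_(0 <= j < p) F j.
Proof.
move=> hF; elim=> [|l IH]; first by rewrite mul0n big_geq.
have -> : (l.+1 * p = l * p + p)%N by lia.
rewrite (big_cat_nat (n := l * p)) /=; [|lia|lia].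
by rewrite IH sum_shift // mulSn addnC.
Qed.

Lemma sum_eq_count (a b L : nat) :
  \sum_(0 <= j < L) (j + a == b : nat) = ((a <= b) && (b < a + L) : nat).
Proof.
elim: L => [|L IH]; first by rewrite big_geq //; lia.
rewrite big_nat_recr //= IH; lia.
Qed.

Lemma sum_interval (lo hi n : nat) :
  \sum_(0 <= i < n) ((lo <= i) && (i < hi) : nat) = (minn hi n - lo)%N.
Proof.
elim: n => [|n IH]; first by rewrite big_geq //; lia.
rewrite big_nat_recr //= IH; lia.
Qed.

Lemma tri_full (n : nat) (F : nat -> nat -> nat) :
  \sum_(0 <= i < n) \sum_(0 <= j < n - i) F i j =
  \sum_(0 <= i < n) \sum_(0 <= j < n) ((i + j < n) * F i j)%N.
Proof.
apply: eq_big_nat => i hi.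
rewrite [RHS](big_cat_nat (n := n - i)) /=; [|lia|lia].
have -> : \sum_(n - i <= j < n) ((i + j < n) * F i j)%N = 0%N.
  rewrite big1_seq // => j; rewrite mem_index_iota => hj.
  have -> : (i + j < n) = false by lia.
  by rewrite mul0n.
rewrite addn0.
apply: eq_big_nat => j hj; have -> : (i + j < n) = true by lia.
by rewrite mul1n.
Qed.

Lemma tri_swap (n : nat) (F : nat -> nat -> nat) :
  \sum_(0 <= i < n) \sum_(0 <= j < n - i) F i j =
  \sum_(0 <= j < n) \sum_(0 <= i < n - j) F i j.
Proof.
rewrite tri_full (tri_full n (fun j i => F i j)) exchange_big /=.
apply: eq_big_nat => j _; apply: eq_big_nat => i _; by rewrite addnC.
Qed.

Lemma sum_fiber (n L : nat) (w f : nat -> nat -> nat) (g : nat -> nat) :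
  (forall i j, (i + j < n)%N -> f i j < L) ->
  \sum_(0 <= i < n) \sum_(0 <= j < n - i) (w i j * g (f i j))%N =
  \sum_(0 <= l < L) (g l * \sum_(0 <= i < n) \sum_(0 <= j < n - i) (w i j * (f i j == l)))%N.
Proof.
move=> hf.
under [RHS]eq_bigr => l _ do rewrite big_distrr /=.
under [RHS]eq_bigr => l _ do under eq_bigr => i _ do rewrite big_distrr /=.
rewrite exchange_big /=; apply: eq_big_nat => i hi.
rewrite exchange_big /=; apply: eq_big_nat => j hj.
rewrite (bigD1_seq (f i j)) /=; last by apply: iota_uniq.
  rewrite eqxx muln1 big1 ?addn0; first by rewrite mulnC.
  by move=> l /negbTE; rewrite eq_sym => ->; rewrite !muln0.
rewrite mem_index_iota; have := hf i j; lia.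
Qed.

Local Open Scope ring_scope.

Definition HF (a b i k r : int) : int :=
  if r == 0 then a - b * k else if r == 1 then b * (i + 2 * k + 1)
  else - a - b * (i + k + 1).

Definition H (a b i d : int) : int := HF a b i (d %/ 3)%Z (d %% 3)%Z.
Definition G (a b i j : int) : int := H a b i (j - i).

Lemma Hform a b i d k r : d = k * 3 + r -> 0 <= r < 3 -> H a b i d = HF a b i k r.
Proof.
move=> hd hr; rewrite /H.
have -> : (d %/ 3)%Z = k by lia.
have -> : (d %% 3)%Z = r by lia.
by [].
Qed.

Lemma Hdec (d : int) : exists k r : int, d = k * 3 + r /\ 0 <= r < 3.
Proof. exists (d %/ 3)%Z, (d %% 3)%Z; lia. Qed.

Lemma Gstep a b (i j : int) : G a b (i + 1) j = - G a b i j - G a b i (j + 1).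
Proof.
rewrite /G.
have [k [r [hd hr]]] := Hdec (j - i).
have [hr0|[hr0|hr0]] : r = 0 \/ r = 1 \/ r = 2 by lia.
all: subst r.
- rewrite (@Hform a b i (j - i) k 0) //.
  rewrite (@Hform a b (i+1) (j - (i+1)) (k-1) 2); [|lia|lia].
  rewrite (@Hform a b i (j + 1 - i) k 1); [|lia|lia].
  rewrite /HF /=; ring.
- rewrite (@Hform a b i (j - i) k 1) //.
  rewrite (@Hform a b (i+1) (j - (i+1)) k 0); [|lia|lia].
  rewrite (@Hform a b i (j + 1 - i) k 2); [|lia|lia].
  rewrite /HF /=; ring.
- rewrite (@Hform a b i (j - i) k 2) //.
  rewrite (@Hform a b (i+1) (j - (i+1)) k 1); [|lia|lia].
  rewrite (@Hform a b i (j + 1 - i) (k+1) 0); [|lia|lia].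
  rewrite /HF /=; ring.
Qed.

Lemma piz_add_mul (m : nat) (y c : int) : piz m (y + c * m%:Z) = piz m y.
Proof. by rewrite /piz addrC modzMDl. Qed.

Lemma piz_mod (m : nat) (y : int) : piz m (piz m y) = piz m y.
Proof. by rewrite /piz modz_mod. Qed.

Lemma pizE (m : nat) (y : int) : piz m y = y - (y %/ m%:Z)%Z * m%:Z.
Proof. rewrite /piz {2}(divz_eq y m%:Z); ring. Qed.

Lemma piz_step (m : nat) (x y : int) :
  piz m (- piz m x - piz m y) = piz m (- x - y).
Proof.
rewrite (pizE m x) (pizE m y).
have -> : - (x - (x %/ m%:Z)%Z * m%:Z) - (y - (y %/ m%:Z)%Z * m%:Z)
   = (- x - y) + ((x %/ m%:Z)%Z + (y %/ m%:Z)%Z) * m%:Z by ring.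
by rewrite piz_add_mul.
Qed.

Lemma Gper_j a b (m l : nat) (i j : int) :
  exists c, G a b i (j + (3 * m * l)%N%:Z) = G a b i j + c * m%:Z.
Proof.
rewrite /G.
have [k [r [hd hr]]] := Hdec (j - i).
rewrite (@Hform a b i (j - i) k r) //.
rewrite (@Hform a b i (j + (3 * m * l)%N%:Z - i) (k + (m * l)%N%:Z) r); [|lia|lia].
rewrite /HF; case: ifP => _.
  by exists (- b * l%:Z); rewrite PoszM; ring.
case: ifP => _.
  by exists (2 * b * l%:Z); rewrite PoszM; ring.
by exists (- b * l%:Z); rewrite PoszM; ring.
Qed.

Lemma Gper_i a b (m l : nat) (i j : int) :
  exists c, G a b (i + (3 * m * l)%N%:Z) j = G a b i j + c * m%:Z.
Proof.
rewrite /G.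
have [k [r [hd hr]]] := Hdec (j - i).
rewrite (@Hform a b i (j - i) k r) //.
rewrite (@Hform a b (i + (3 * m * l)%N%:Z) (j - (i + (3 * m * l)%N%:Z)) (k - (m * l)%N%:Z) r); [|lia|lia].
rewrite /HF; case: ifP => _.
  by exists (b * l%:Z); rewrite PoszM; ring.
case: ifP => _.
  by exists (b * l%:Z); rewrite PoszM; ring.
by exists (- 2 * b * l%:Z); rewrite PoszM; ring.
Qed.

Lemma pizGj a b (m l : nat) (i j : int) :
  piz m (G a b i (j + (3 * m * l)%N%:Z)) = piz m (G a b i j).
Proof. by have [c ->] := Gper_j a b m l i j; rewrite piz_add_mul. Qed.

Lemma pizGi a b (m l : nat) (i j : int) :
  piz m (G a b (i + (3 * m * l)%N%:Z) j) = piz m (G a b i j).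
Proof. by have [c ->] := Gper_i a b m l i j; rewrite piz_add_mul. Qed.

Lemma orbitG a b (m : nat) (u : int -> int) :
  (forall j, u j = piz m (G a b 0 j)) ->
  forall (i : nat) j, orbitm m u i j = piz m (G a b i%:Z j).
Proof.
move=> hu; elim=> [|i IH] j /=.
  by rewrite hu piz_mod.
rewrite !IH piz_step.
have -> : Posz i.+1 = Posz i + 1 by rewrite -addn1 PoszD.
by rewrite Gstep.
Qed.


Lemma sum_delta n (F : 'I_n -> int) (k : 'I_n) :
  \sum_(s < n) F s * ((s : nat) == (k : nat))%:R = F k.
Proof.
rewrite (bigD1 k) //= eqxx mulr1 big1 ?addr0 // => s hs.
by rewrite val_eqE (negbTE hs) mulr0.
Qed.

Lemma mulX24 (v : 'rV[int]_24) (r : 'I_24) :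
  (v *m X24) 0 r = v 0 r + v 0 (inord (23 - r)).
Proof.
rewrite !mxE.
under eq_bigr => s _ do rewrite /X24 mxE mulrDr.
rewrite big_split /= (sum_delta _ (fun s => v 0 s) r).
have h : (23 - r < 24)%N by rewrite ltnS leq_subr.
pose k : 'I_24 := inord (23 - r).
have hk : (23 - r)%N = k by rewrite /k inordK.
rewrite -/k hk.
by rewrite (sum_delta _ (fun s => v 0 s)).
Qed.

Lemma piz_IAP (m : nat) (x y z q : int) :
  piz m (piz m x + q * piz m (piz m y + piz m z)) = piz m (x + q * (y + z)).
Proof.
rewrite [piz m (piz m y + piz m z)]pizE.
set w := ((piz m y + piz m z) %/ m%:Z)%Z.
rewrite (pizE m x) (pizE m y) (pizE m z).
have -> : x - (x %/ m%:Z)%Z * m%:Z + q * (y - (y %/ m%:Z)%Z * m%:Z + (z - (z %/ m%:Z)%Z * m%:Z) - w * m%:Z)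
  = x + q * (y + z) + (- (x %/ m%:Z)%Z - q * (y %/ m%:Z)%Z - q * (z %/ m%:Z)%Z - q * w) * m%:Z by ring.
by rewrite piz_add_mul.
Qed.

Definition l1 : seq int := flatten (nseq 8 [:: 1; 0; -1]).
Definition l2 : seq int := [:: 0; 1; -1; -1; 3; -2; -2; 5; -3; -3; 7; -4; -4; 9;
                         -5; -5; 11; -6; -6; 13; -7; -7; 15; -8].

Lemma H24 a b (q : int) (r0 : nat) : (r0 < 24)%N ->
  H a b 0 (q * 24 + r0%:Z) = HF a b 0 (q * 8 + (r0 %/ 3)%N%:Z) (r0 %% 3)%N%:Z.
Proof. move=> hr; apply: Hform; lia. Qed.

Lemma IAP_case a1 a2 (q : int) (r0 : nat) : (r0 < 24)%N ->
  let x := a1 * nth 0 l1 r0 + a2 * nth 0 l2 r0 in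
  let y := a1 * nth 0 l1 (23 - r0) + a2 * nth 0 l2 (23 - r0) in
  x + q * (x + y) = H a1 a2 0 (q * 24 + r0%:Z).
Proof.
move=> hr; rewrite H24 //.
do 24? (case: r0 hr => [|r0] hr; first by rewrite /HF /divn /modn /=; ring).
by [].
Qed.

Lemma SseqG (m : nat) (a1 a2 : int) (A : 'rV[int]_24) :
  A = a1 *: A1 + a2 *: A2 -> forall j, Sseq m A j = piz m (G a1 a2 0 j).
Proof.
move=> hA j; rewrite /Sseq /IAP /=.
set r : 'I_24 := inord `|(j %% 24)%Z|%N.
set q := (j %/ 24)%Z.
have E : map_mx (piz m) (map_mx (piz m) A *m X24) 0 r =
   piz m (piz m (A 0 r) + piz m (A 0 (inord (23 - r)))).
  by rewrite mxE mulX24 !mxE.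
rewrite E mxE piz_IAP.
have hr : (r : nat) = `|(j %% 24)%Z|%N by rewrite /r inordK //; lia.
have hr' : ((inord (23 - r) : 'I_24) : nat) = (23 - r)%N by rewrite inordK //; lia.
rewrite hA !mxE hr' -/l1 -/l2.
have -> : G a1 a2 0 j = H a1 a2 0 (q * 24 + (r : nat)%:Z).
  rewrite /G subr0; congr H; rewrite hr /q; lia.
rewrite -IAP_case //.
Qed.


Definition cnt (m : nat) (c e x : int) : nat :=
  (\sum_(0 <= k < m) (piz m (c + e * k%:Z) == x))%N.

Lemma sum_count_seq (T : Type) (s : seq T) (P : pred T) :
  (\sum_(k <- s) (P k : nat))%N = count P s.
Proof. by elim: s => [|y s IH]; rewrite ?big_nil ?big_cons ?IH. Qed.

Lemma piz_range (m : nat) (y : int) : (0 < m)%N -> 0 <= piz m y < m%:Z.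
Proof.
move=> hm; rewrite /piz modz_ge0 ?ltz_pmod //; lia.
Qed.

Lemma dvd_small (m : nat) (z : int) : (m%:Z %| z)%Z -> `|z| < m%:Z -> z = 0.
Proof.
move=> /dvdzP [q ->]; rewrite normrM => h.
have [->|hq] := eqVneq q 0; first by rewrite mul0r.
have h1 : 1 <= `|q| by lia.
have h2 : `|q| * `|m%:Z| >= `|m%:Z| by rewrite ler_peMl //; lia.
lia.
Qed.

Lemma piz_inj_eq (m : nat) (y z : int) :
  piz m y = piz m z -> (m%:Z %| y - z)%Z.
Proof. by move=> h; rewrite -eqz_mod_dvd; apply/eqP. Qed.

Lemma perm_lin (m : nat) (c u : int) : (0 < m)%N -> coprimez u m ->
  perm_eq [seq piz m (c + u * k%:Z) | k <- iota 0 m] [seq (k%:Z) | k <- iota 0 m].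
Proof.
move=> hm hu.
have U1 : uniq [seq piz m (c + u * k%:Z) | k <- iota 0 m].
  rewrite map_inj_in_uniq ?iota_uniq // => k1 k2; rewrite !mem_iota => h1 h2 /piz_inj_eq.
  have -> : c + u * k1%:Z - (c + u * k2%:Z) = (k1%:Z - k2%:Z) * u by ring.
  rewrite Gauss_dvdzl; last by rewrite coprimez_sym.
  move=> /dvd_small h; have := h ltac:(lia); lia.
have U2 : uniq [seq (k%:Z) | k <- iota 0 m].
  by rewrite map_inj_uniq ?iota_uniq // => k1 k2 [].
apply: uniq_perm => //.
have Hsub : {subset [seq piz m (c + u * k%:Z) | k <- iota 0 m] <= [seq (k%:Z) | k <- iota 0 m]}.
  move=> y /mapP [k _ ->]; apply/mapP.
  have := piz_range m (c + u * k%:Z) hm => hr.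
  exists `|piz m (c + u * k%:Z)|%N; last by lia.
  rewrite mem_iota; lia.
have hs : (size [seq (k%:Z) | k <- iota 0 m] <= size [seq piz m (c + u * k%:Z) | k <- iota 0 m])%N by rewrite !size_map.
have [_ H] := uniq_min_size U1 Hsub hs.
exact: H.
Qed.

Lemma cnt_seq (m : nat) (c e x : int) :
  cnt m c e x = count (pred1 x) [seq piz m (c + e * k%:Z) | k <- iota 0 m].
Proof.
rewrite /cnt /index_iota subn0 count_map -sum_count_seq.
by apply: eq_bigr.
Qed.

Lemma cnt_unit (m : nat) (c u x : int) : (0 < m)%N -> coprimez u m ->
  0 <= x < m%:Z -> cnt m c u x = 1%N.
Proof.
move=> hm hu hx; rewrite cnt_seq.
move/permP: (perm_lin _ c _ hm hu) => ->.
rewrite count_uniq_mem; last by rewrite map_inj_uniq ?iota_uniq // => k1 k2 [].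
have -> : x \in [seq (k%:Z) | k <- iota 0 m] by apply/mapP; exists `|x|%N; [rewrite mem_iota; lia| lia].
by [].
Qed.

Lemma cnt_scale (m : nat) (c e u x : int) : (0 < m)%N -> coprimez u m ->
  cnt m c (e * u) x = cnt m c e x.
Proof.
move=> hm hu.
have E : forall k : nat, piz m (c + e * u * k%:Z) = piz m (c + e * piz m (0 + u * k%:Z)).
  move=> k; rewrite add0r (pizE m (u * k%:Z)).
  have -> : c + e * (u * k%:Z - ((u * k%:Z) %/ m%:Z)%Z * m%:Z) =
            c + e * u * k%:Z + (- e * ((u * k%:Z) %/ m%:Z)%Z) * m%:Z by ring.
  by rewrite piz_add_mul.
rewrite /cnt /index_iota subn0.
under eq_bigr => k _ do rewrite E.
rewrite -(big_map (fun k : nat => piz m (0 + u * k%:Z)) xpredT (fun y => (piz m (c + e * y) == x) : nat)).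
rewrite (perm_big _ (perm_lin _ 0 _ hm hu)) big_map.
by [].
Qed.

Lemma cnt3 (m' : nat) (c x : int) : (0 < m')%N -> 0 <= x < (3 * m')%N%:Z ->
  cnt (3 * m') c 3 x = (3 * (3 %| (x - c)%R)%Z)%N.
Proof.
move=> hm hx; set m := (3 * m')%N.
have hm0 : (0 < m)%N by rewrite /m; lia.
rewrite /cnt.
have -> : m = (3 * m')%N by [].
have hper : forall j, ((piz m (c + 3 * (j + m')%N%:Z) == x) : nat) = (piz m (c + 3 * j%:Z) == x).
  move=> j; congr (nat_of_bool (_ == x)).
  have -> : c + 3 * (j + m')%N%:Z = c + 3 * j%:Z + 1 * m%:Z by rewrite /m; lia.
  by rewrite piz_add_mul.
rewrite (sum_periods (fun k => (piz m (c + 3 * k%:Z) == x) : nat) m' hper 3).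
congr (3 * _)%N.
rewrite /index_iota subn0 -(big_map (fun k : nat => piz m (c + 3 * k%:Z)) xpredT (fun y => (y == x) : nat)).
rewrite sum_count_seq count_uniq_mem; last first.
  rewrite map_inj_in_uniq ?iota_uniq // => k1 k2; rewrite !mem_iota => h1 h2 /piz_inj_eq.
  move=> /dvdzP [q hq].
  have : (k1%:Z - k2%:Z) = q * m'%:Z by rewrite /m in hq; lia.
  move=> hq'; have : q = 0 by nia.
  move=> hq0; rewrite hq0 in hq'; lia.
congr (nat_of_bool _).
apply/idP/idP.
- move=> /mapP [k _ ->]; rewrite pizE /m; apply/dvdzP.
  exists (k%:Z - ((c + 3 * k%:Z) %/ (3 * m')%N%:Z)%Z * m'%:Z); lia.
- move=> /dvdzP [y hy]; apply/mapP.
  have hr := piz_range m' y hm.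
  exists `|piz m' y|%N; first by rewrite mem_iota; lia.
  have hk : Posz `|piz m' y|%N = y - (y %/ m'%:Z)%Z * m'%:Z by rewrite -pizE; lia.
  rewrite hk.
  have -> : c + 3 * (y - (y %/ m'%:Z)%Z * m'%:Z) = x + (- (y %/ m'%:Z)%Z) * m%:Z by rewrite /m; lia.
  rewrite piz_add_mul /piz modz_small //; lia.
Qed.


Definition goodb (m : nat) (a b : int) : Prop :=
  exists g u : int, b = g * u /\ coprimez u m /\
    (coprimez g m \/ (g = 3 /\ (3 %| m)%N /\ ~~ (3 %| a)%Z)).

Lemma three_sum (m : nat) (a b c1 v0 v1 v2 x : int) : (0 < m)%N -> goodb m a b ->
  coprimez v0 m -> coprimez v1 m -> coprimez v2 m -> 0 <= x < m%:Z ->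
  (cnt m a (b * v0) x + cnt m (b * c1) (b * v1) x + cnt m (- a - b * c1) (b * v2) x = 3)%N.
Proof.
move=> hm [g [u [hb [hu hg]]]] h0 h1 h2 hx.
rewrite hb -!mulrA !cnt_scale // ?coprimezMl ?hu ?h0 ?h1 ?h2 //.
case: hg => [hg | [hg3 [h3m ha]]].
  by rewrite !cnt_unit.
move: hx; case/dvdnP: h3m => m' hm'; subst m g => hx.
have hm0 : (0 < m')%N by lia.
rewrite mulnC in hx *.
rewrite !cnt3 //; lia.
Qed.

Lemma Gshift a b (i j : nat) : G a b i%:Z (j + i)%N%:Z = H a b i%:Z j%:Z.
Proof. by rewrite /G; congr H; lia. Qed.

Lemma H3 a b (i : int) (k r : nat) : (r < 3)%N ->
  H a b i (3 * k + r)%N%:Z = HF a b i k%:Z r%:Z.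
Proof. by move=> hr; apply: Hform; lia. Qed.

Lemma Row3 (m : nat) (a b : int) (i : nat) (x : int) : (0 < m)%N -> odd m ->
  goodb m a b -> 0 <= x < m%:Z ->
  (\sum_(0 <= j < 3 * m) (piz m (G a b i%:Z j%:Z) == x))%N = 3%N.
Proof.
move=> hm hodd hg hx.
set F := fun j : nat => (piz m (G a b i%:Z j%:Z) == x) : nat.
have hF : forall j, F (j + 3 * m)%N = F j.
  move=> j; rewrite /F; congr (nat_of_bool (_ == x)).
  have := pizGj a b m 1 i j; rewrite muln1 => <-; congr (piz m (G _ _ _ _)); lia.
rewrite -(sum_shift F (3 * m) hF i).
rewrite -{1}[i]add0n big_addn addKn.
rewrite sum_blocks3.
have c2 : coprimez 2 m by rewrite coprimezE /= coprime2n.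
have cm1 : coprimez (-1) m by rewrite coprimeNz coprimezE /= coprime1n.
have E : forall k : nat, (F (3 * k + i) + F ((3 * k + 1) + i) + F ((3 * k + 2) + i))%N =
   ((piz m (a + b * -1 * k%:Z) == x) + (piz m (b * (i%:Z + 1) + b * 2 * k%:Z) == x)
    + (piz m (- a - b * (i%:Z + 1) + b * -1 * k%:Z) == x))%N.
  move=> k; rewrite /F !Gshift.
  have -> : Posz (3 * k)%N = Posz (3 * k + 0)%N by rewrite addn0.
  rewrite (H3 a b i k 0) // (H3 a b i k 1) // (H3 a b i k 2) // /HF /=.
  congr (nat_of_bool (piz m _ == x) + nat_of_bool (piz m _ == x) + nat_of_bool (piz m _ == x))%N; ring.
rewrite (eq_big_nat _ _ (fun k _ => E k)) !big_split /=.
exact: three_sum.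
Qed.


Lemma fold_half (m K : nat) (g F : nat -> nat) :
  (forall l, g (l + m)%N = g l) -> (forall l, (l < m)%N -> (F l + F (l + m)%N = K)%N) ->
  (\sum_(0 <= l < 2 * m) (g l * F l) = K * \sum_(0 <= l < m) g l)%N.
Proof.
move=> hg hF.
rewrite (big_cat_nat (n := m)) /=; [|lia|lia].
have -> : (\sum_(m <= l < 2 * m) (g l * F l) = \sum_(0 <= l < m) (g (l + m) * F (l + m)))%N.
  rewrite -{1}[m]add0n big_addn; congr bigop; apply: congr1; lia.
rewrite -big_split /= big_distrr /=; apply: eq_big_nat => l hl.
rewrite hg -mulnDr hF; [by rewrite mulnC | lia].
Qed.

Section Tri.
Local Open Scope nat_scope.

Lemma F0_closed (m l : nat) : l < 2 * m ->
  \sum_(0 <= i < 3 * m) \sum_(0 <= j < 3 * m - i)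
     (((j + 3 * m - i) %% 3 == 0) * ((j + 3 * m - i) %/ 3 == l))
  = minn ((6 * m - 3 * l + 1) %/ 2) (3 * m) - (3 * m - 3 * l).
Proof.
move=> hl.
rewrite -sum_interval; apply: eq_big_nat => i hi.
have -> : \sum_(0 <= j < 3 * m - i) (((j + 3 * m - i) %% 3 == 0) * ((j + 3 * m - i) %/ 3 == l))
   = \sum_(0 <= j < 3 * m - i) (j + 3 * m == i + 3 * l : nat).
  apply: eq_big_nat => j hj; lia.
rewrite sum_eq_count; lia.
Qed.

Lemma F1_closed (m l : nat) :
  \sum_(0 <= i < 3 * m) \sum_(0 <= j < 3 * m - i)
     (((j + 3 * m - i) %% 3 == 1) * ((i + 2 * j + 1) %/ 3 == l))
  = minn ((3 * l + 1) %/ 2) (3 * m) - (3 * l - 3 * m).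
Proof.
have -> : \sum_(0 <= i < 3 * m) \sum_(0 <= j < 3 * m - i)
     (((j + 3 * m - i) %% 3 == 1) * ((i + 2 * j + 1) %/ 3 == l))
   = \sum_(0 <= i < 3 * m) \sum_(0 <= j < 3 * m - i) (i + (2 * j + 1) == 3 * l : nat).
  apply: eq_big_nat => i hi; apply: eq_big_nat => j hj; lia.
rewrite tri_swap -sum_interval; apply: eq_big_nat => j hj.
rewrite sum_eq_count; lia.
Qed.

Lemma F2_closed (m l : nat) :
  \sum_(0 <= i < 3 * m) \sum_(0 <= j < 3 * m - i)
     (((j + 3 * m - i) %% 3 == 2) * ((2 * i + j + 1) %/ 3 == l))
  = minn ((3 * l + 1) %/ 2) (3 * m) - (3 * l - 3 * m).
Proof.
rewrite -sum_interval; apply: eq_big_nat => i hi.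
have -> : \sum_(0 <= j < 3 * m - i) (((j + 3 * m - i) %% 3 == 2) * ((2 * i + j + 1) %/ 3 == l))
   = \sum_(0 <= j < 3 * m - i) (j + (2 * i + 1) == 3 * l : nat).
  apply: eq_big_nat => j hj; lia.
rewrite sum_eq_count; lia.
Qed.

End Tri.

Definition cls (m i j : nat) : nat := ((j + 3 * m - i) %% 3)%N.
Definition w0 (m i j : nat) : nat := (cls m i j == 0)%N.
Definition w1 (m i j : nat) : nat := (cls m i j == 1)%N.
Definition w2 (m i j : nat) : nat := (cls m i j == 2)%N.
Definition ln0 (m i j : nat) : nat := ((j + 3 * m - i) %/ 3)%N.
Definition ln1 (m i j : nat) : nat := ((i + 2 * j + 1) %/ 3)%N.
Definition ln2 (m i j : nat) : nat := ((2 * i + j + 1) %/ 3)%N.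
Definition g0 (m : nat) (a b x : int) (l : nat) : nat := (piz m (a + b * -1 * l%:Z) == x).
Definition g1 (m : nat) (a b x : int) (l : nat) : nat := (piz m (b * 0 + b * 1 * l%:Z) == x).
Definition g2 (m : nat) (a b x : int) (l : nat) : nat := (piz m (- a - b * 0 + b * -1 * l%:Z) == x).

Lemma pointwise (m : nat) (a b x : int) (i j : nat) : (i + j < 3 * m)%N ->
  ((piz m (G a b i%:Z j%:Z) == x) : nat) =
  (w0 m i j * g0 m a b x (ln0 m i j) + w1 m i j * g1 m a b x (ln1 m i j)
   + w2 m i j * g2 m a b x (ln2 m i j))%N.
Proof.
move=> hij.
rewrite /w0 /w1 /w2 /g0 /g1 /g2.
have hG : G a b i j = HF a b i ((ln0 m i j)%:Z - m%:Z) (cls m i j)%:Z.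
  by rewrite /G; apply: Hform; rewrite /ln0 /cls; lia.
rewrite hG.
have [hr|[hr|hr]] : (cls m i j = 0 \/ cls m i j = 1 \/ cls m i j = 2)%N by rewrite /cls; lia.
- rewrite hr /HF /= mul1n !mul0n !addn0.
  have -> : a - b * ((ln0 m i j)%:Z - m%:Z) = a + b * -1 * (ln0 m i j)%:Z + b * m%:Z by ring.
  by rewrite piz_add_mul.
- rewrite hr /HF /= mul1n !mul0n add0n addn0.
  have -> : (i%:Z + 2 * ((ln0 m i j)%:Z - m%:Z) + 1) = (ln1 m i j)%:Z.
    move: hr; rewrite /ln0 /ln1 /cls; lia.
  by congr (nat_of_bool (piz m _ == x)); ring.
- rewrite hr /HF /= mul1n !mul0n !add0n.
  have -> : (i%:Z + ((ln0 m i j)%:Z - m%:Z) + 1) = (ln2 m i j)%:Z.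
    move: hr; rewrite /ln0 /ln2 /cls; lia.
  by congr (nat_of_bool (piz m _ == x)); ring.
Qed.

Lemma T3 (m : nat) (a b x : int) : (0 < m)%N -> odd m -> goodb m a b -> 0 <= x < m%:Z ->
  (\sum_(0 <= i < 3 * m) \sum_(0 <= j < 3 * m - i) (piz m (G a b i%:Z j%:Z) == x))%N
  = (3 * ((3 * m + 1) %/ 2))%N.
Proof.
move=> hm hodd hg hx.
set K := ((3 * m + 1) %/ 2)%N.
have -> : (\sum_(0 <= i < 3 * m) \sum_(0 <= j < 3 * m - i) (piz m (G a b i%:Z j%:Z) == x))%N
  = (\sum_(0 <= i < 3 * m) \sum_(0 <= j < 3 * m - i) (w0 m i j * g0 m a b x (ln0 m i j))
   + \sum_(0 <= i < 3 * m) \sum_(0 <= j < 3 * m - i) (w1 m i j * g1 m a b x (ln1 m i j))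
   + \sum_(0 <= i < 3 * m) \sum_(0 <= j < 3 * m - i) (w2 m i j * g2 m a b x (ln2 m i j)))%N.
  rewrite -!big_split; apply: eq_big_nat => i hi; rewrite -!big_split.
  by apply: eq_big_nat => j hj; apply: pointwise; lia.
rewrite (sum_fiber (3 * m) (2 * m) (w0 m) (ln0 m) (g0 m a b x)); last by move=> i j; rewrite /ln0; lia.
rewrite (sum_fiber (3 * m) (2 * m) (w1 m) (ln1 m) (g1 m a b x)); last by move=> i j; rewrite /ln1; lia.
rewrite (sum_fiber (3 * m) (2 * m) (w2 m) (ln2 m) (g2 m a b x)); last by move=> i j; rewrite /ln2; lia.
have hg0 : forall l, g0 m a b x (l + m) = g0 m a b x l.
  move=> l; rewrite /g0; congr (nat_of_bool (_ == x)).
  have -> : a + b * -1 * (l + m)%N%:Z = a + b * -1 * l%:Z + (- b) * m%:Z by rewrite PoszD; ring.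
  by rewrite piz_add_mul.
rewrite (fold_half m K (g0 m a b x) _ hg0); last first.
  move=> l hl; rewrite /w0 /cls /ln0 !F0_closed; [rewrite /K; lia| lia | lia].
have hg1 : forall l, g1 m a b x (l + m) = g1 m a b x l.
  move=> l; rewrite /g1; congr (nat_of_bool (_ == x)).
  have -> : b * 0 + b * 1 * (l + m)%N%:Z = b * 0 + b * 1 * l%:Z + b * m%:Z by rewrite PoszD; ring.
  by rewrite piz_add_mul.
rewrite (fold_half m K (g1 m a b x) _ hg1); last first.
  move=> l hl; rewrite /w1 /cls /ln1 !F1_closed; rewrite /K; lia.
have hg2 : forall l, g2 m a b x (l + m) = g2 m a b x l.
  move=> l; rewrite /g2; congr (nat_of_bool (_ == x)).
  have -> : - a - b * 0 + b * -1 * (l + m)%N%:Z = - a - b * 0 + b * -1 * l%:Z + (- b) * m%:Z by rewrite PoszD; ring.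
  by rewrite piz_add_mul.
rewrite (fold_half m K (g2 m a b x) _ hg2); last first.
  move=> l hl; rewrite /w2 /cls /ln2 !F2_closed; rewrite /K; lia.
rewrite -!mulnDr mulnC; congr (_ * _)%N.
have c1 : coprimez 1 m by rewrite coprimezE /= coprime1n.
have cm1 : coprimez (-1) m by rewrite coprimeNz.
exact: (three_sum m a b 0 (-1) 1 (-1) x hm hg cm1 c1 cm1 hx).
Qed.


Definition Tn (m : nat) (a b : int) (n : nat) (x : int) : nat :=
  (\sum_(0 <= i < n) \sum_(0 <= j < n - i) (piz m (G a b i%:Z j%:Z) == x))%N.

Lemma sum_shift_lo (F : nat -> nat) (p n : nat) :
  (\sum_(p <= i < p + n) F i = \sum_(0 <= i < n) F (i + p))%N.
Proof.
rewrite -{1}[p]add0n big_addn.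
by have -> : (p + n - p = n)%N by lia.
Qed.

Lemma T_step (m : nat) (a b : int) (lam : nat) (x : int) :
  Tn m a b (lam.+1 * (3 * m)) x =
  (Tn m a b (lam * (3 * m)) x + Tn m a b (3 * m) x +
   \sum_(0 <= i < 3 * m) \sum_(0 <= j < lam * (3 * m)) (piz m (G a b i%:Z j%:Z) == x))%N.
Proof.
set p := (3 * m)%N; set n := (lam * p)%N.
have hn : n = (3 * m * lam)%N by rewrite /n /p mulnC.
rewrite /Tn.
have -> : (lam.+1 * p = p + n)%N by rewrite /n mulSn.
rewrite (big_cat_nat (n := p)) /=; [|lia|lia].
rewrite sum_shift_lo.
have E2 : (\sum_(0 <= i < n) \sum_(0 <= j < p + n - (i + p)) (piz m (G a b (i + p)%N%:Z j%:Z) == x))%N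
   = (\sum_(0 <= i < n) \sum_(0 <= j < n - i) (piz m (G a b i%:Z j%:Z) == x))%N.
  apply: eq_big_nat => i hi.
  have -> : (p + n - (i + p) = n - i)%N by lia.
  apply: eq_big_nat => j hj; congr (nat_of_bool (_ == x)).
  have := pizGi a b m 1 i j; rewrite muln1 => <-; congr (piz m (G _ _ _ _)); rewrite /p; lia.
rewrite E2.
have E1 : (\sum_(0 <= i < p) \sum_(0 <= j < p + n - i) (piz m (G a b i%:Z j%:Z) == x))%N
   = (\sum_(0 <= i < p) \sum_(0 <= j < n) (piz m (G a b i%:Z j%:Z) == x)
      + \sum_(0 <= i < p) \sum_(0 <= j < p - i) (piz m (G a b i%:Z j%:Z) == x))%N.
  rewrite -big_split; apply: eq_big_nat => i hi /=.
  rewrite (big_cat_nat (n := n)) /=; [|lia|lia].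
  congr (_ + _)%N.
  have -> : (p + n - i = n + (p - i))%N by lia.
  rewrite sum_shift_lo.
  apply: eq_big_nat => j hj; congr (nat_of_bool (_ == x)).
  have := pizGj a b m lam i j => <-; congr (piz m (G _ _ _ _)); rewrite hn; lia.
rewrite E1; lia.
Qed.

Lemma RowL (m : nat) (a b : int) (i lam : nat) (x : int) : (0 < m)%N -> odd m ->
  goodb m a b -> 0 <= x < m%:Z ->
  (\sum_(0 <= j < lam * (3 * m)) (piz m (G a b i%:Z j%:Z) == x))%N = (lam * 3)%N.
Proof.
move=> hm hodd hg hx.
rewrite (sum_periods (fun j : nat => (piz m (G a b i%:Z j%:Z) == x) : nat) (3 * m)).
  by rewrite Row3.
move=> j /=; congr (nat_of_bool (_ == x)).
have := pizGj a b m 1 i j; rewrite muln1 => <-; congr (piz m (G _ _ _ _)); lia.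
Qed.

Lemma T_balanced (m : nat) (a b : int) (lam : nat) (x y : int) : (0 < m)%N -> odd m ->
  goodb m a b -> 0 <= x < m%:Z -> 0 <= y < m%:Z ->
  Tn m a b (lam * (3 * m)) x = Tn m a b (lam * (3 * m)) y.
Proof.
move=> hm hodd hg hx hy.
elim: lam => [|lam IH]; first by rewrite /Tn mul0n !big_geq.
rewrite !T_step IH /Tn !T3 //.
congr (_ + _)%N.
by apply: eq_big_nat => i _; rewrite !RowL.
Qed.

Lemma count_pairs (f : nat -> nat -> int) (P : pred int) (s : seq nat) (t : nat -> seq nat) :
  count P [seq f ij.1 ij.2 | ij <- [seq (i, j) | i <- s, j <- t i]] =
  (\sum_(i <- s) \sum_(j <- t i) (P (f i j) : nat))%N.
Proof.
elim: s => [|i s IH] /=; first by rewrite big_nil.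
rewrite map_cat count_cat IH big_cons -map_comp count_map -sum_count_seq.
by [].
Qed.

Lemma nab_orbit (m : nat) (u : int -> int) (n : nat) :
  forall i j, (i + j < n)%N -> nab m (prefixS u n) i j = orbitm m u i j%:Z.
Proof.
elim=> [|i IH] j hij /=.
  rewrite /prefixS (nth_map 0%N) ?size_iota // nth_iota //; lia.
rewrite IH; last by lia.
rewrite IH; last by lia.
by rewrite -addn1 PoszD.
Qed.

Lemma count_nabla (m : nat) (u : int -> int) (n : nat) (x : int) :
  count (pred1 x) (nabla m (prefixS u n)) =
  (\sum_(0 <= i < n) \sum_(0 <= j < n - i) (orbitm m u i j%:Z == x))%N.
Proof.
rewrite /nabla count_pairs.
have -> : size (prefixS u n) = n by rewrite /prefixS size_map size_iota.
rewrite /index_iota subn0; apply: eq_big_seq => i; rewrite mem_iota => hi.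
rewrite subn0; apply: eq_big_seq => j; rewrite mem_iota => hj.
by rewrite nab_orbit //; lia.
Qed.


Lemma goodb_inO (m : nat) (a1 a2 : int) (sgn : bool) (al be : nat) :
  odd m -> (al <= 1)%N -> a2 = (-1) ^+ sgn * 3 ^+ al * 2 ^+ be ->
  ~~ (3 %| gcdz a1 a2)%Z -> goodb m a1 a2.
Proof.
move=> hodd hal ha2 hg.
have c2 : coprimez 2 m by rewrite coprimezE /= coprime2n.
have cm1 : coprimez (-1) m by rewrite coprimeNz coprimezE /= coprime1n.
have cu : coprimez ((-1) ^+ sgn * 2 ^+ be) m.
  by rewrite coprimezMl !coprimezXl.
exists (3 ^+ al), ((-1) ^+ sgn * 2 ^+ be); split; first by rewrite ha2; ring.
split=> //.
case: al hal ha2 => [|[|al]] // _ ha2.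
  by left; rewrite expr0 coprimezE /= coprime1n.
rewrite expr1.
case: (boolP (coprimez 3 m)) => h3; first by left.
right; split=> //; split.
  by move: h3; rewrite coprimezE /= prime_coprime // negbK.
apply/negP => ha1; move: hg; rewrite dvdz_gcd ha1 /= ha2.
have -> : (-1) ^+ sgn * 3 ^+ 1 * 2 ^+ be = ((-1) ^+ sgn * 2 ^+ be) * 3 :> int by ring.
by rewrite dvdz_mull.
Qed.

Theorem corollary8 (A : 'rV[int]_24) (m : nat) :
  inO A -> odd m -> (0 < m)%N ->
  periodic (orbitm m (Sseq m A)) (3 * m)%N (3 * m)%N /\
  (forall lam : nat, balanced m (nabla m (prefixS (Sseq m A) (3 * lam * m)%N))).
Proof.
move=> [a1 [a2 [sgn [al [be [hal [ha2 [hgcd hA]]]]]]]] hodd hm.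
have hS := SseqG m a1 a2 A hA.
have hO := orbitG a1 a2 m (Sseq m A) hS.
have hgood := goodb_inO m a1 a2 sgn al be hodd hal ha2 hgcd.
split.
  move=> i j; rewrite !hO; split.
    by rewrite PoszD; have := pizGi a1 a2 m 1 i j; rewrite muln1.
  by have := pizGj a1 a2 m 1 i j; rewrite muln1.
move=> lam x y hx hy; rewrite !count_nabla.
have -> : (3 * lam * m = lam * (3 * m))%N by lia.
have := T_balanced m a1 a2 lam x y hm hodd hgood hx hy; rewrite /Tn => E.
rewrite (eq_big_nat _ _ (fun i _ => eq_big_nat _ _ (fun j _ => congr1 (fun z => nat_of_bool (z == x)) (hO i j)))).
rewrite (eq_big_nat _ _ (fun i _ => eq_big_nat _ _ (fun j _ => congr1 (fun z => nat_of_bool (z == y)) (hO i j)))).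
exact: E.
Qed.
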